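(* Let $q\ge 2$ and $0\le\rho<1-1/q$, and let $\gamma>0$. Then for all sufficiently large $n$ the following holds. Let $C\subseteq\{0,\dots,q-1\}^n$ be a code of rate $1-H_q(\rho)+\gamma$. Then there exists a codeword $c\in C$ such that for at least a $1-q^{-\Omega(\gamma n)}$ fraction of error patterns $e\in\{0,\dots,q-1\}^n$ of Hamming weight at most $\rho n$, the Hamming ball of radius $\rho n$ around $c+e$ contains at least two codewords of $C$.
   Context: $H_q(x)=x\log_q(q-1)-x\log_q x-(1-x)\log_q(1-x)$ is the $q$-ary entropy function. A code $C\subseteq\Sigma^n$ with $|\Sigma|=q$ has rate $\log_q|C|/n$. Addition $c+e$ is coordinatewise (e.g. modulo $q$). The Hamming weight of a vector is its number of nonzero coordinates, and the Hamming ball of radius $r$ around $y$ is the set of vectors differing from $y$ in at most $r$ coordinates. *)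

(* Defs.v *)
From mathcomp Require Import all_boot.
From Stdlib Require Import Reals.
Set Implicit Arguments. Unset Strict Implicit. Unset Printing Implicit Defensive.

Definition word (q n : nat) := {ffun 'I_n -> 'I_q}.

Definition addq (q : nat) (a b : 'I_q) : 'I_q :=
  Ordinal (ltn_pmod (a + b) (leq_ltn_trans (leq0n a) (ltn_ord a))).

Definition wadd (q n : nat) (c e : word q n) : word q n :=
  [ffun i => addq (c i) (e i)].

Definition hwt (q n : nat) (e : word q n) : nat := #|[set i | nat_of_ord (e i) != 0%N]|.

Definition hdist (q n : nat) (x y : word q n) : nat := #|[set i | x i != y i]|.

Open Scope R_scope.

Definition Rleb (x y : R) : bool := if Rle_dec x y then true else false.

Definition logq (q : nat) (x : R) : R := ln x / ln (INR q).

(* q-ary entropy function (with 0 log 0 = 0, since Stdlib's ln 0 = 0) *)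
Definition Hq (q : nat) (x : R) : R :=
  x * logq q (INR q - 1) - x * logq q x - (1 - x) * logq q (1 - x).

Definition rate (q n : nat) (C : {set word q n}) : R :=
  logq q (INR #|C|) / INR n.

Definition errs (q n : nat) (r : R) : {set word q n} :=
  [set e : word q n | Rleb (INR (hwt e)) r].

Definition bad_errs (q n : nat) (C : {set word q n}) (c : word q n) (r : R)
  : {set word q n} :=
  [set e in errs q n r |
     leq 2 #|[set c' in C | Rleb (INR (hdist c' (wadd c e))) r]|].

(* Main.v *)
Require Import Defs.
From mathcomp Require Import all_boot.
From Stdlib Require Import Reals.
From Stdlib Require Import Lra Lia.
From mathcomp Require Import all_boot zify.
Set Implicit Arguments. Unset Strict Implicit. Unset Printing Implicit Defensive.

Section NatPart.
Local Open Scope nat_scope.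



Lemma addq_inj q (a b b' : 'I_q) : addq a b = addq a b' -> b = b'.
Proof.
move=> /(congr1 val) /= /eqP; rewrite eqn_modDl => /eqP.
rewrite !modn_small // => h; exact: val_inj.
Qed.

Lemma addq_eq_l q (a b : 'I_q) : (addq a b == a) = (nat_of_ord b == 0).
Proof.
have := eqn_modDl a b 0 q.
rewrite addn0 (modn_small (ltn_ord a)) (modn_small (ltn_ord b)) mod0n => <-.
by [].
Qed.

Lemma hdist_wadd q n (c e : word q n) : hdist c (wadd c e) = hwt e.
Proof.
apply: eq_card => i; rewrite !inE ffunE eq_sym addq_eq_l //.
Qed.

Lemma exists_good q n (C : {set word q n}) (r : R) (c0 : word q n) : c0 \in C ->
  exists2 c, c \in C & #|C| * #|errs q n r :\: bad_errs C c r| <= q ^ n.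
Proof.
move=> Cc0.
pose G c := errs q n r :\: bad_errs C c r.
pose P := [set p : word q n * word q n | (p.1 \in C) && (p.2 \in G p.1)].
have sumP : \sum_(c in C) #|G c| = #|P|.
  rewrite -sum1_card.
  under eq_bigr do rewrite -sum1_card.
  rewrite pair_big_dep; apply: eq_bigl => p; by rewrite /P inE.
have injP : {in P &, injective (fun p => wadd p.1 p.2)}.
  move=> [c e] [c' e']; rewrite /P !inE /= => /andP[Cc Ge] /andP[Cc' Ge'] Heq.
  move: Ge Ge' => /andP[Hb He] /andP[Hb' He'].
  rewrite He /= in Hb; rewrite He' /= in Hb'.
  set S := [set c'' in C | Rleb (INR (hdist c'' (wadd c e))) r].
  have cS : c \in S by rewrite inE Cc hdist_wadd.
  have c'S : c' \in S by rewrite inE Cc' Heq hdist_wadd.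
  have ecc : c = c'.
    apply/eqP; apply: contraNT Hb => ncc.
    have hsub : [set c; c'] \subset S.
       apply/subsetP => x; rewrite in_set2 => /orP[] /eqP -> //.
    by have := subset_leq_card hsub; rewrite cards2 ncc.
  subst c'; congr pair; apply/ffunP => i.
  by apply: (@addq_inj _ (c i)); move/ffunP: Heq => /(_ i); rewrite !ffunE.
have Pq : #|P| <= q ^ n.
  rewrite -(card_in_imset injP).
  apply: leq_trans (max_card _) _.
  by rewrite card_ffun !card_ord.
case: (pickP [pred c | (c \in C) && (#|C| * #|G c| <= q ^ n)]) => [c /andP[]|none].
  by exists c.
have Cpos : 0 < #|C| by apply/card_gt0P; exists c0.
have : \sum_(c in C) (q ^ n).+1 <= \sum_(c in C) #|C| * #|G c|.
  apply: leq_sum => c Cc; have := none c; rewrite /= Cc /= => /negbT; rewrite -ltnNge //.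
rewrite -big_distrr /= sumP sum_nat_const.
move=> h; have := leq_mul (leqnn #|C|) Pq.
move=> h2; have := leq_trans h h2; by rewrite leq_pmul2l // ltnn.
Qed.



Definition supp q n (w : word q n) : {set 'I_n} := [set i | nat_of_ord (w i) != 0].

Lemma card_supp_eq q n (A : {set 'I_n}) : 0 < q ->
  #|[set w : word q n | supp w == A]| = (q.-1) ^ #|A|.
Proof.
move=> q0.
pose F (i : 'I_n) : pred 'I_q :=
  if i \in A then [predC [pred a : 'I_q | nat_of_ord a == 0]] else [pred a : 'I_q | nat_of_ord a == 0].
have -> : #|[set w : word q n | supp w == A]| = #|(family F : simpl_pred (word q n))|.
  apply: eq_card => w; rewrite inE; apply/eqP/familyP => [eA i|h].
    rewrite /F -eA inE; case: ifPn => H; [exact: H | exact: (negbNE H)].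
  apply/setP => i; rewrite inE; have := h i; rewrite /F; case: (i \in A) => H.
    exact: H.
  by rewrite (eqP H).
have c0 : #|[pred a : 'I_q | nat_of_ord a == 0]| = 1.
  rewrite -(card1 (Ordinal q0)); apply: eq_card => a; rewrite !inE.
  apply/eqP/eqP => [h|->] //; first [exact h | (apply/val_inj; exact h)].
have c1 : #|[predC [pred a : 'I_q | nat_of_ord a == 0]]| = q.-1.
  have := cardC [pred a : 'I_q | nat_of_ord a == 0]; rewrite card_ord c0.
  by move=> h; rewrite -[in RHS]h add1n.
have := @card_family _ (fun _ => _) F. move=> /= E. rewrite E foldrE big_image /=.
rewrite -prod_nat_const big_mkcond /=.
rewrite [RHS]big_mkcond /=; apply: eq_bigr => i _; rewrite /F; by case: (i \in A).
Qed.

Lemma card_wt q n k : 0 < q ->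
  #|[set w : word q n | hwt w == k]| = 'C(n, k) * (q.-1) ^ k.
Proof.
move=> q0.
rewrite -sum1_card.
rewrite (partition_big (@supp q n) [pred A : {set 'I_n} | #|A| == k]); last first.
  by move=> w; rewrite inE.
rewrite /=.
transitivity (\sum_(A : {set 'I_n} | #|A| == k) (q.-1) ^ k).
  apply: eq_bigr => A /eqP cA.
  rewrite -cA -(card_supp_eq A q0) -sum1_card; apply: eq_bigl => w.
  rewrite !inE; apply/andP/idP => [[_ ?]//|/eqP eA]; split; [rewrite -eA; exact: eqxx | rewrite eA; exact: eqxx].
rewrite (eq_bigl (mem [set A : {set 'I_n} | #|A| == k])); last by move=> A; rewrite /= !inE.
by rewrite sum_nat_const card_draws card_ord.
Qed.

End NatPart.

Section Mode.
Local Open Scope nat_scope.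
Variables n k : nat.
Hypothesis kn : k <= n.
Let T j := 'C(n, j) * k ^ j * (n - k) ^ (n - j).

Lemma T_rec j : j < n -> T j.+1 * j.+1 * (n - k) = T j * (n - j) * k.
Proof.
move=> jn; rewrite /T.
have e1 : n - j = (n - j.+1).+1 by lia.
rewrite e1 expnS expnSr.
have := mul_bin_left n j; rewrite -e1.
move: ('C(n, j.+1)) ('C(n, j)) (k ^ j) ((n - k) ^ (n - j.+1)) => a b c d h.
rewrite (_ : a * (k * c) * d * j.+1 * (n - k) = (j.+1 * a) * (k * c * d * (n - k))); last by lia.
rewrite h; lia.
Qed.

Lemma T_up j : j < k -> T j <= T j.+1.
Proof.
move=> jk.
case: (ltnP k n) => kn'.
  have := T_rec (leq_trans jk kn).
  move: (T j) (T j.+1) => a b h.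
  have hp : 0 < j.+1 * (n - k) by rewrite muln_gt0; lia.
  have hf : j.+1 * (n - k) <= (n - j) * k.
    have h0 : n * j.+1 <= n * k := leq_mul (leqnn n) jk.
    have h1 : j.+1 * k <= n * k := leq_mul (leq_trans jk kn) (leqnn k).
    have h2 : j.+1 * k <= j.+1 * n := leq_mul (leqnn _) kn.
    rewrite mulnBl mulnBr; lia.
  have : a * (j.+1 * (n - k)) <= b * (j.+1 * (n - k)).
    apply: (leq_trans (leq_mul (leqnn a) hf)); lia.
  by rewrite leq_pmul2r.
rewrite /T (_ : n - k = 0); last lia.
rewrite (@exp0n (n - j)); last lia.
by rewrite muln0.
Qed.

Lemma T_down j : k <= j -> j < n -> T j.+1 <= T j.
Proof.
move=> kj jn.
have := T_rec jn.
move: (T j) (T j.+1) => a b h.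
have hp : 0 < j.+1 * (n - k) by rewrite muln_gt0; lia.
have hf : (n - j) * k <= j.+1 * (n - k).
  have h0 : n * k.+1 <= n * j.+1 by rewrite leq_mul2l ltnS kj orbT.
  have h1 : j * k <= n * k := leq_mul (ltnW jn) (leqnn k).
  have h2 : j.+1 * k <= j.+1 * n := leq_mul (leqnn _) kn.
  rewrite mulnBl mulnBr; lia.
have : b * (j.+1 * (n - k)) <= a * (j.+1 * (n - k)).
  apply: (leq_trans _ (leq_mul (leqnn a) hf)); lia.
by rewrite leq_pmul2r.
Qed.

Lemma T_max j : j <= n -> T j <= T k.
Proof.
move=> jn; case: (leqP j k) => jk.
  have H : forall d, d <= k -> T (k - d) <= T k.
    elim=> [|d IH] dk; first by rewrite subn0.
    apply: leq_trans (IH (ltnW dk)).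
    have -> : k - d = (k - d.+1).+1 by lia.
    apply: T_up; lia.
  have := H (k - j) (leq_subr _ _); by rewrite subKn.
have H : forall d, k + d <= n -> T (k + d) <= T k.
  elim=> [|d IH] dk; first by rewrite addn0.
  have dk' : k + d < n by rewrite addnS in dk.
  apply: leq_trans (IH (ltnW dk')).
  rewrite addnS; apply: T_down => //; lia.
have := H (j - k); rewrite subnKC ?(ltnW jk) //; apply; lia.
Qed.

Lemma binom_mode : n ^ n <= n.+1 * ('C(n, k) * k ^ k * (n - k) ^ (n - k)).
Proof.
rewrite -[X in X ^ _](subnK kn) expnDn.
rewrite -[X in X * _](card_ord n.+1) -sum_nat_const.
apply: leq_sum => i _.
have := T_max (ltn_ord i : (i : nat) <= n); rewrite /T.
by rewrite [(_ ^ (n - i)) * _]mulnC mulnA.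
Qed.
End Mode.

Open Scope R_scope.

Lemma ln_le' x y : 0 < x -> x <= y -> ln x <= ln y.
Proof.
move=> hx hxy; case: (Rle_lt_or_eq_dec _ _ hxy) => h.
  by apply: Rlt_le; apply: ln_increasing.
by rewrite h; apply: Rle_refl.
Qed.

Lemma ln_le_sub1 y : 0 < y -> ln y <= y - 1.
Proof. move=> hy; have := exp_ineq1_le (ln y); rewrite exp_ln //; lra. Qed.

Lemma ln0 : ln 0 = 0.
Proof. rewrite /ln; destruct (Rlt_dec 0 0) as [h|h]; [exfalso; lra | reflexivity]. Qed.

Lemma xlnx_le x rho : 0 <= x -> x <= rho -> x * ln x <= x * ln rho.
Proof.
move=> h0 h1; case: (Rle_lt_or_eq_dec _ _ h0) => h.
  apply: Rmult_le_compat_l; first lra; exact: ln_le'.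
by rewrite -h !Rmult_0_l; apply: Rle_refl.
Qed.

Lemma ent_diff x rho : 0 <= x -> x <= rho -> rho < 1 ->
  (- rho * ln rho - (1 - rho) * ln (1 - rho)) - (- x * ln x - (1 - x) * ln (1 - x))
  <= (rho - x) * (Rabs (ln rho) + / (1 - rho)).
Proof.
move=> h0 h1 h2.
have i1 := xlnx_le h0 h1.
have hr : 0 < 1 - rho by lra.
have hx : 0 < 1 - x by lra.
have e : ln (1 - x) = ln (1 - rho) + ln ((1 - x) / (1 - rho)).
  rewrite -ln_mult //; last by apply: Rdiv_lt_0_compat.
  by congr ln; field; lra.
have i2 := ln_le_sub1 (Rdiv_lt_0_compat _ _ hx hr).
have e2 : (1 - x) / (1 - rho) - 1 = (rho - x) * / (1 - rho) by field; lra.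
rewrite e2 in i2.
have l1 : ln (1 - rho) <= 0.
  rewrite -ln_1; apply: ln_le'; lra.
have ab := Rle_abs (- ln rho).
rewrite Rabs_Ropp in ab.
have iv : 0 < / (1 - rho) by apply: Rinv_0_lt_compat.
rewrite e.
have t1 : (1 - x) * ln ((1 - x) / (1 - rho)) <= (1 - x) * ((rho - x) * / (1 - rho)).
  apply: Rmult_le_compat_l; lra.
have t2 : (1 - x) * ((rho - x) * / (1 - rho)) <= (rho - x) * / (1 - rho).
  have : 0 <= (rho - x) * / (1 - rho) by apply: Rmult_le_pos; lra.
  nra.
have t3 : (rho - x) * ln (1 - rho) <= 0 by nra.
have t4 : (rho - x) * - ln rho <= (rho - x) * Rabs (ln rho) by apply: Rmult_le_compat_l; lra.
nra.
Qed.

Lemma ent_count (n k : nat) (rho L1 : R) : (0 < n)%N -> 0 <= rho -> rho < 1 -> 0 <= L1 ->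
  INR k <= rho * INR n -> rho * INR n < INR k + 1 ->
  INR n * (rho * L1 - rho * ln rho - (1 - rho) * ln (1 - rho)) <=
  INR k * L1 + INR n * ln (INR n) - INR k * ln (INR k) - INR (n - k) * ln (INR (n - k))
  + (L1 + Rabs (ln rho) + / (1 - rho)).
Proof.
move=> n0 r0 r1 l0 hk1 hk2.
have nR : 0 < INR n by apply: lt_0_INR; apply/ltP.
have kn : (k < n)%N.
  apply/ltP; apply: INR_lt; nra.
have eR : INR (n - k) = INR n - INR k by rewrite minus_INR //; apply/leP; exact: ltnW.
have nkR : 0 < INR (n - k) by apply: lt_0_INR; apply/ltP; rewrite subn_gt0.
pose x := INR k / INR n.
have nx : INR n * x = INR k by rewrite /x; field; lra.
have kR0 := pos_INR k.
have x0 : 0 <= x by nra.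
have xr : x <= rho by nra.
have hd := ent_diff x0 xr r1.
have e1 : INR n * (x * ln x) = INR k * ln (INR k) - INR k * ln (INR n).
  case: (posnP k) => [k0|kp].
    rewrite /x k0 /= /Rdiv !Rmult_0_l; ring.
  have kR : 0 < INR k by apply: lt_0_INR; apply/ltP.
  rewrite /x /Rdiv ln_mult ?ln_Rinv //; last by apply: Rinv_0_lt_compat.
  field; lra.
have e2 : INR n * ((1 - x) * ln (1 - x)) = INR (n - k) * ln (INR (n - k)) - INR (n - k) * ln (INR n).
  have -> : 1 - x = INR (n - k) / INR n by rewrite eR /x; field; lra.
  rewrite /Rdiv ln_mult ?ln_Rinv //; last by apply: Rinv_0_lt_compat.
  field; lra.
have D0 : 0 <= Rabs (ln rho) + / (1 - rho).
  have := Rabs_pos (ln rho); have : 0 < / (1 - rho) by apply: Rinv_0_lt_compat; lra.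
  lra.
have d1 : 0 <= INR n * (rho - x) by nra.
have d2 : INR n * (rho - x) <= 1 by nra.
have : INR n * (rho * L1 - rho * ln rho - (1 - rho) * ln (1 - rho))
   - INR n * (x * L1 - x * ln x - (1 - x) * ln (1 - x))
   <= INR n * (rho - x) * (L1 + Rabs (ln rho) + / (1 - rho)).
  have := Rmult_le_compat_l _ _ _ (Rlt_le _ _ nR) hd.
  nra.
have : INR n * (rho - x) * (L1 + Rabs (ln rho) + / (1 - rho)) <= L1 + Rabs (ln rho) + / (1 - rho).
  nra.
rewrite eR in e2 *.
nra.
Qed.

Lemma INR_expn a m : INR (a ^ m)%N = INR a ^ m.
Proof.
elim: m => [|m IH]; first by rewrite expn0.
rewrite expnS -multE mult_INR IH //.
Qed.

Lemma INR_muln a b : INR (a * b)%N = INR a * INR b.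
Proof. by rewrite -multE mult_INR. Qed.

Lemma ln_INR_expn a m : ln (INR (a ^ m)%N) = INR m * ln (INR a).
Proof.
case: (posnP a) => [->|ap].
  case: (posnP m) => [->|mp].
    by rewrite expn0 /= ln_1; ring.
  rewrite exp0n // /= ln0; ring.
rewrite INR_expn ln_pow //; apply: lt_0_INR; exact/ltP.
Qed.

Lemma ln_INR_muln a b : (0 < a)%N -> (0 < b)%N -> ln (INR (a * b)%N) = ln (INR a) + ln (INR b).
Proof.
move=> ha hb; rewrite INR_muln ln_mult //; apply: lt_0_INR; exact/ltP.
Qed.

Lemma expnn_gt0 m : (0 < m ^ m)%N.
Proof. by rewrite expn_gt0; case: m. Qed.

Lemma cnt_ln (n k b Q : nat) : (0 < n)%N -> (0 < Q)%N ->
  (n ^ n * Q ^ k <= n.+1 * b * k ^ k * (n - k) ^ (n - k))%N ->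
  INR n * ln (INR n) + INR k * ln (INR Q) <=
  ln (INR n + 1) + ln (INR b) + INR k * ln (INR k) + INR (n - k) * ln (INR (n - k)).
Proof.
move=> n0 Q0 h.
have p1 : (0 < n ^ n)%N by rewrite expn_gt0 n0.
have p2 : (0 < Q ^ k)%N by rewrite expn_gt0 Q0.
have p3 := expnn_gt0 k.
have p4 := expnn_gt0 (n - k).
have pl : (0 < n ^ n * Q ^ k)%N by rewrite muln_gt0 p1 p2.
have b0 : (0 < b)%N.
  rewrite lt0n; apply/negP => /eqP eb.
  by have := leq_trans pl h; rewrite eb muln0 !mul0n.
have := ln_le' (lt_0_INR _ (elimT ltP pl)) (le_INR _ _ (elimT leP h)).
rewrite ln_INR_muln // !ln_INR_expn.
rewrite ln_INR_muln ?muln_gt0 ?b0 ?p3 //.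
rewrite ln_INR_muln ?muln_gt0 ?b0 //.
rewrite ln_INR_muln // !ln_INR_expn S_INR.
lra.
Qed.

Lemma exp_quad t : 0 <= t -> t * t / 4 <= exp t.
Proof.
move=> t0.
have e : exp t = exp (t / 2) * exp (t / 2) by rewrite -exp_plus; congr exp; field.
have := exp_ineq1_le (t / 2).
rewrite e; nra.
Qed.

Lemma eventually_ok (a c0 : R) : 0 < a -> exists N : nat, forall n : nat, (N <= n)%N ->
  (0 < n)%N /\ ln (INR n + 1) + c0 <= a * INR n.
Proof.
move=> a0.
have [N hN] := INR_archimed 1 (1 + 32 / (a * a) + 2 * Rabs c0 / a) Rlt_0_1.
exists N => n hn.
have nN : INR N <= INR n by apply: le_INR; exact/leP.
have q1 : 0 <= 32 / (a * a) by apply: Rmult_le_pos; [lra | apply: Rlt_le; apply: Rinv_0_lt_compat; nra].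
have q2 : 0 <= 2 * Rabs c0 / a by apply: Rmult_le_pos; [have := Rabs_pos c0; lra | apply: Rlt_le; apply: Rinv_0_lt_compat; nra].
have n1 : 1 < INR n by lra.
split; first by apply/ltP; apply: INR_lt; rewrite /=; lra.
have e1 : a * a * (32 / (a * a)) = 32 by field; lra.
have e2 : a * (2 * Rabs c0 / a) = 2 * Rabs c0 by field; lra.
have h1 : 32 <= a * a * INR n.
  rewrite -e1; apply: Rmult_le_compat_l; nra.
have h2 : 2 * Rabs c0 <= a * INR n.
  rewrite -e2; apply: Rmult_le_compat_l; lra.
have h3 : INR n + 1 <= exp (a * INR n / 2).
  have := exp_quad (t := a * INR n / 2) ltac:(nra).
  nra.
have h4 : ln (INR n + 1) <= a * INR n / 2.
  rewrite -[X in _ <= X]ln_exp; apply: ln_le' => //; lra.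
have := Rle_abs c0; lra.
Qed.

Lemma nat_floor r : 0 <= r -> exists k : nat, INR k <= r /\ r < INR k + 1.
Proof.
move=> r0.
have [h1 h2] := archimed r.
have z1 : (1 <= up r)%Z.
  have : (0 < up r)%Z by apply: lt_IZR; rewrite /=; lra.
  lia.
exists (Z.to_nat (up r - 1)).
rewrite INR_IZR_INZ Znat.Z2Nat.id; last lia.
rewrite minus_IZR /=; lra.
Qed.

Lemma exp_le' x y : x <= y -> exp x <= exp y.
Proof.
move=> h; case: (Rle_lt_or_eq_dec _ _ h) => [l|->]; last exact: Rle_refl.
exact: Rlt_le (exp_increasing _ _ l).
Qed.

Theorem lemma3p4 (q : nat) (rho : R) :
  leq 2 q -> 0 <= rho -> rho < 1 - 1 / INR q ->
  exists kappa : R, 0 < kappa /\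
  forall gamma : R, 0 < gamma ->
  exists N : nat, forall n : nat, leq N n ->
  forall C : {set word q n},
    rate C >= 1 - Hq q rho + gamma ->
    exists c : word q n, c \in C /\
      INR #|bad_errs C c (rho * INR n)| / INR #|errs q n (rho * INR n)|
        >= 1 - Rpower (INR q) (- (kappa * gamma * INR n)).
Proof.
move=> hq r0 r1.
exists (1/2); split; first lra.
move=> g g0.
have qR : 2 <= INR q by apply: (le_INR 2); exact/leP.
have lq0 : 0 < ln (INR q) by rewrite -ln_1; apply: ln_increasing; lra.
set lq := ln (INR q).
set L1 := ln (INR q - 1).
have L10 : 0 <= L1 by rewrite /L1 -ln_1; apply: ln_le'; lra.
have iq : 0 < 1 / INR q by apply: Rdiv_lt_0_compat; lra.
have rr1 : rho < 1 by lra.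
set c0 := L1 + Rabs (ln rho) + / (1 - rho).
set E := rho * L1 - rho * ln rho - (1 - rho) * ln (1 - rho).
have glq : 0 < g * lq by apply: Rmult_lt_0_compat.
have a0 : 0 < g * lq / 2 by lra.
have [N hN] := eventually_ok c0 a0.
exists N => n hn C hC.
have [n0 hL] := hN n hn.
have nR : 1 <= INR n by apply: (le_INR 1); exact/leP.
set r := rho * INR n.
have [k [hk1 hk2]] := nat_floor (r := r) ltac:(rewrite /r; nra).
have kn : (k < n)%N by apply/ltP; apply: INR_lt; rewrite /r in hk1; nra.
set b := #|errs q n r|.
have q0 : (0 < q)%N by apply: leq_trans hq.
have Wsub : [set w : word q n | hwt w == k] \subset errs q n r.
  apply/subsetP => w; rewrite !inE => /eqP ->.
  by rewrite /Rleb; case: (Rle_dec (INR k) r).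
have Wb : ('C(n, k) * (q.-1) ^ k <= b)%N by rewrite -card_wt //; exact: subset_leq_card.
have hnat : (n ^ n * (q.-1) ^ k <= n.+1 * b * k ^ k * (n - k) ^ (n - k))%N.
  have h1 := leq_mul (binom_mode (ltnW kn)) (leqnn ((q.-1) ^ k)%N).
  apply: leq_trans h1 _.
  have h2 := leq_mul (leq_mul (leq_mul (leqnn n.+1) Wb) (leqnn (k ^ k)%N)) (leqnn ((n - k) ^ (n - k))%N).
  apply: leq_trans _ h2.
  move: ('C(n, k)) (k ^ k)%N ((n - k) ^ (n - k))%N ((q.-1) ^ k)%N => x1 x2 x3 x4.
  rewrite (_ : n.+1 * (x1 * x2 * x3) * x4 = n.+1 * (x1 * x4) * x2 * x3)%N //; lia.
have q10 : (0 < q.-1)%N by rewrite -ltnS prednK.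
have eQ : INR (q.-1) = INR q - 1 by rewrite -{2}(prednK q0) S_INR; ring.
have F0 := cnt_ln n0 q10 hnat.
rewrite eQ -/L1 in F0.
have F0' := ent_count n0 r0 rr1 L10 hk1 hk2.
have F1 : INR n * E <= ln (INR n + 1) + ln (INR b) + c0 by rewrite /E /c0; lra.
have b0 : (0 < b)%N.
  apply: leq_trans Wb; rewrite muln_gt0 bin_gt0 (ltnW kn) /= expn_gt0 q10 //.
have bR : 0 < INR b by apply: lt_0_INR; exact/ltP.
have F2 : ln (INR b) <= INR n * lq.
  rewrite /lq -ln_INR_expn; apply: ln_le' => //; apply: le_INR; apply/leP.
  apply: leq_trans (max_card _) _; by rewrite card_ffun !card_ord.
have lqn : lq <> 0 by apply: Rgt_not_eq.
have nn : INR n <> 0 by apply: Rgt_not_eq; lra.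
have eH : Hq q rho = E / lq by rewrite /Hq /logq /E -/L1 -/lq; field.
have erate : rate C = ln (INR #|C|) / (lq * INR n) by rewrite /rate /logq -/lq; field.
have F3 : INR n * lq - INR n * E + g * INR n * lq <= ln (INR #|C|).
  rewrite erate eH in hC.
  have pos : 0 < lq * INR n by nra.
  have := Rmult_le_compat_r _ _ _ (Rlt_le _ _ pos) (Rge_le _ _ hC).
  rewrite (_ : ln (INR #|C|) / (lq * INR n) * (lq * INR n) = ln (INR #|C|)); last by field; lra.
  rewrite (_ : (1 - E / lq + g) * (lq * INR n) = INR n * lq - INR n * E + g * INR n * lq); last by field; lra.
  done.
case: (posnP #|C|) => [C0|Cpos].
  exfalso; rewrite C0 /= ln0 in F3.
  have : 0 < g * lq * INR n by nra.
  nra.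
have [cc Ccc] : exists cc, cc \in C by apply/card_gt0P.
have [c cC hc] := exists_good r Ccc.
exists c; split => //.
set G := errs q n r :\: bad_errs C c r.
have eb : (#|bad_errs C c r| + #|G| = b)%N.
  rewrite /G /b -(cardsID (bad_errs C c r) (errs q n r)).
  rewrite (setIidPr _) //.
  by apply/subsetP => x; rewrite inE => /andP[].
have ebR : INR #|bad_errs C c r| = INR b - INR #|G|.
  rewrite -eb plus_INR; ring.
set gg := INR #|G|.
have claim : gg <= INR b * exp (- (1 / 2 * g * INR n) * lq).
  case: (posnP #|G|) => [G0|Gp].
    rewrite /gg G0 /=; have := exp_pos (- (1 / 2 * g * INR n) * lq); nra.
  have gR : 0 < gg by apply: lt_0_INR; exact/ltP.
  have F4 : ln (INR #|C|) + ln gg <= INR n * lq.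
    rewrite /gg -ln_INR_muln // /lq -ln_INR_expn.
    apply: ln_le'; first by apply: lt_0_INR; apply/ltP; rewrite muln_gt0 Cpos.
    by apply: le_INR; apply/leP.
  have F5 : ln gg <= ln (INR b) + (- (1 / 2 * g * INR n) * lq) by nra.
  rewrite -(exp_ln gg) // -(exp_ln (INR b)) // -exp_plus.
  exact: exp_le'.
rewrite ebR /Rpower.
set X := exp _ in claim *.
apply: Rle_ge.
have -> : (INR b - gg) / INR b = 1 - gg * / INR b by field; lra.
have : gg * / INR b <= X.
  have ib : 0 < / INR b by apply: Rinv_0_lt_compat.
  have := Rmult_le_compat_r _ _ _ (Rlt_le _ _ ib) claim.
  rewrite (_ : INR b * X * / INR b = X) //; field; lra.
lra.
Qed.
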